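(* Let $G$ be a $2$-connected graph, let $F\subseteq E(G)$ be an inclusion-wise minimal set of edges such that $T=G/F$ is a cactus, let $\mathcal{W}$ be the $T$-witness structure of $G$, and let $f:V(G)\to\{1,2,3\}$ be a coloring compatible with $\mathcal{W}$. Let $Y,Z$ be two distinct monochromatic components of $f$, and let $P=(v_1,\dots,v_\ell)$, $\ell\ge2$, be a connected component of $G-(Y\cup Z)$ that is a maximal cable path in $G$ with $N_G(v_1)\subseteq Y\cup\{v_2\}$ and $N_G(v_\ell)\subseteq Z\cup\{v_{\ell-1}\}$. Then every vertex of $P$ forms a singleton witness set of $\mathcal{W}$, and each of $Y$ and $Z$ contains a big witness set of $\mathcal{W}$.
   Context: A cactus is a connected graph in which every edge lies in at most one cycle. For $F\subseteq E(G)$, $G/F$ is the graph whose vertices correspond to the parts of the partition of $V(G)$ into the vertex sets of connected components of $(V(F),F)$ and singletons $\{v\}$ for $v\notin V(F)$, two parts adjacent iff some edge of $G$ joins them; this partition is the $G/F$-witness structure $\mathcal{W}$, with $W(t)$ the part for $t\in V(G/F)$. A witness set is big if it has at least two vertices, singleton otherwise. A cable path in a graph $H$ is a path $(v_1,\dots,v_q)$ such that $N_H(v_i)=\{v_{i-1},v_{i+1}\}$ for each $2\le i\le q-1$; it is maximal if it is not contained in a longer cable path. A coloring $f:V(G)\to\{1,2,3\}$ is compatible with $\mathcal{W}$ if: (1) every witness set is monochromatic; (2) for every edge $t_xt_y\in E(T)$ with $W(t_x),W(t_y)$ both big, $f(W(t_x))\ne f(W(t_y))$; (3) for every cable path $(t_x,t_1,\dots,t_q,t_y)$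 in $T$ ($q\ge1$) with $W(t_x),W(t_y)$ big and all $W(t_i)$ singleton, $f(W(t_x))\neq f(W(t_1))$ and $f(W(t_y))\ne f(W(t_q))$. A monochromatic component of a coloring is an inclusion-wise maximal set of vertices that all have the same color and induce a connected subgraph. *)

(* Defs.v *)
From mathcomp Require Import all_boot.
Set Implicit Arguments. Unset Strict Implicit. Unset Printing Implicit Defensive.

(* Simple graphs: a vertex set S : {set V} inside a finType V and an
   adjacency relation adj : rel V (assumed symmetric and irreflexive
   where relevant). Only adjacencies between vertices of S matter. *)
Section Graphs.
Variable V : finType.

Definition restr (S : {set V}) (adj : rel V) : rel V :=
  [rel x y | [&& adj x y, x \in S & y \in S]].

Definition gconnected (S : {set V}) (adj : rel V) : Prop :=
  forall x y, x \in S -> y \in S -> connect (restr S adj) x y.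

Definition nbh (S : {set V}) (adj : rel V) (v : V) : {set V} :=
  [set u in S | adj v u].

Definition is_gpath (S : {set V}) (adj : rel V) (p : seq V) : bool :=
  [&& uniq p, all (fun x => x \in S) p & sorted adj p].

Definition is_gcycle (S : {set V}) (adj : rel V) (c : seq V) : bool :=
  [&& uniq c, 2 < size c, all (fun x => x \in S) c & cycle adj c].

Definition cycle_edges (c : seq V) : {set {set V}} :=
  [set [set x; next c x] | x in c].

(* cactus: connected, and every edge lies in at most one cycle *)
Definition cactus (S : {set V}) (adj : rel V) : Prop :=
  gconnected S adj /\
  forall c1 c2 E, is_gcycle S adj c1 -> is_gcycle S adj c2 ->
    E \in cycle_edges c1 -> E \in cycle_edges c2 ->
    cycle_edges c1 = cycle_edges c2.

(* cable path: path (v_1..v_q) with N(v_i) = {v_(i-1), v_(i+1)}, 2<=i<=q-1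
   (0-based indices 0 < i < size p - 1; the default x0 is irrelevant) *)
Definition cable_path (S : {set V}) (adj : rel V) (p : seq V) : Prop :=
  is_gpath S adj p /\
  forall i (x0 : V), 0 < i -> i.+1 < size p ->
    nbh S adj (nth x0 p i) = [set nth x0 p i.-1; nth x0 p i.+1].

Definition max_cable_path (S : {set V}) (adj : rel V) (p : seq V) : Prop :=
  cable_path S adj p /\
  forall q, cable_path S adj q -> infix p q || infix (rev p) q ->
    size q <= size p.

Definition conn_comp (S : {set V}) (adj : rel V) (C : {set V}) : Prop :=
  [/\ C \subset S, C != set0, gconnected C adj &
    forall C' : {set V}, C \subset C' -> C' \subset S -> gconnected C' adj -> C' = C].

End Graphs.

Section Problem.
Variable V : finType.
Variable e : rel V.

Definition two_connected : Prop :=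
  2 < #|V| /\ gconnected [set: V] e /\
  forall v, gconnected ([set: V] :\ v) e.

(* F is a set of edges of G, stored symmetrically as ordered pairs *)
Definition edge_subset (F : {set V * V}) : Prop :=
  forall x y, (x, y) \in F -> e x y /\ (y, x) \in F.

Definition frel (F : {set V * V}) : rel V := [rel x y | (x, y) \in F].

(* W(v): the part of the G/F-witness structure containing v, i.e. the
   vertex set of the component of (V(F),F) containing v, or {v} *)
Definition wit (F : {set V * V}) (v : V) : {set V} :=
  [set u | connect (frel F) v u].

(* the witness structure = vertex set of G/F *)
Definition wstruct (F : {set V * V}) : {set {set V}} :=
  [set wit F v | v in V].

Definition qadj : rel {set V} :=
  [rel A B : {set V} | (A != B) && [exists x in A, exists y in B, e x y]].

Definition contraction_cactus (F : {set V * V}) : Prop :=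
  cactus (wstruct F) qadj.

Definition minimal_cactus_set (F : {set V * V}) : Prop :=
  [/\ edge_subset F, contraction_cactus F &
    forall F' : {set V * V}, edge_subset F' -> F' \proper F -> ~ contraction_cactus F'].

Definition compatible (F : {set V * V}) (f : V -> 'I_3) : Prop :=
  [/\
      (forall W, W \in wstruct F -> forall x y, x \in W -> y \in W -> f x = f y),
      (forall tx ty, tx \in wstruct F -> ty \in wstruct F -> qadj tx ty ->
         1 < #|tx| -> 1 < #|ty| -> forall x y, x \in tx -> y \in ty -> f x != f y) &
      (* (3) cable paths (tx, t1..tq, ty), q >= 1, of T between big sets
         through singletons *)
      (forall tx ty (mid : seq {set V}), mid != [::] ->
         cable_path (wstruct F) qadj (tx :: rcons mid ty) ->
         1 < #|tx| -> 1 < #|ty| -> all (fun t : {set V} => #|t| == 1) mid ->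
         (forall x y, x \in tx -> y \in head tx mid -> f x != f y) /\
         (forall x y, x \in ty -> y \in last ty mid -> f x != f y))].

Definition mono_conn (f : V -> 'I_3) (S : {set V}) : Prop :=
  [/\ S != set0, (forall x y, x \in S -> y \in S -> f x = f y) & gconnected S e].

Definition mono_comp (f : V -> 'I_3) (Y : {set V}) : Prop :=
  mono_conn f Y /\ forall S : {set V}, mono_conn f S -> Y \subset S -> S = Y.

End Problem.

(* Main.v *)
Require Import Defs.
From mathcomp Require Import all_boot zify.
Import Defs.
Set Implicit Arguments. Unset Strict Implicit. Unset Printing Implicit Defensive.

Section Gen.
Variable T : finType.

Lemma conn_ind (r : rel T) (P : pred T) x y :
  (forall a b, P a -> r a b -> P b) -> P x -> connect r x y -> P y.
Proof.
move=> cl Px /connectP [s pth ->]; elim: s x Px pth => [|z s IH] x Px //= /andP [rxz pth].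
exact: IH (cl _ _ Px rxz) pth.
Qed.

Lemma connect_transfer (r r' : rel T) (P : pred T) x y :
  (forall a b, P a -> r a b -> r' a b && P b) -> P x -> connect r x y -> connect r' x y.
Proof.
move=> cl Px /connectP [s pth ->]; elim: s x Px pth => [|z s IH] x Px //= /andP [rxz pth].
case/andP: (cl _ _ Px rxz) => r'xz Pz.
apply: connect_trans (connect1 r'xz) _. exact: IH.
Qed.

Lemma restrE (S : {set T}) (r : rel T) a b : restr S r a b = [&& r a b, a \in S & b \in S].
Proof. by []. Qed.

Lemma connect_restr_sub (S1 S2 : {set T}) (r : rel T) x y :
  S1 \subset S2 -> connect (restr S1 r) x y -> connect (restr S2 r) x y.
Proof.
move=> sub; apply: connect_sub => a b; rewrite restrE => /and3P [rab aS bS].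
by apply: connect1; rewrite restrE rab !(subsetP sub).
Qed.

Lemma gconnected_union (A B : {set T}) (r : rel T) a b :
  gconnected A r -> gconnected B r -> a \in A -> b \in B ->
  connect (restr (A :|: B) r) a b -> connect (restr (A :|: B) r) b a ->
  gconnected (A :|: B) r.
Proof.
move=> cA cB aA bB ab ba x y; rewrite !inE => /orP [xA|xB] /orP [yA|yB].
- by apply: connect_restr_sub (subsetUl A B) _; exact: cA.
- apply: connect_trans (connect_restr_sub (subsetUl A B) (cA _ _ xA aA)) _.
  apply: connect_trans ab _. by apply: connect_restr_sub (subsetUr A B) _; exact: cB.
- apply: connect_trans (connect_restr_sub (subsetUr A B) (cB _ _ xB bB)) _.
  apply: connect_trans ba _. by apply: connect_restr_sub (subsetUl A B) _; exact: cA.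
- by apply: connect_restr_sub (subsetUr A B) _; exact: cB.
Qed.

Fixpoint pedges (s : seq T) : {set {set T}} :=
  if s is x :: s' then (if s' is y :: _ then [set x; y] |: pedges s' else set0) else set0.

Lemma pedges_cons2 x y s : pedges (x :: y :: s) = [set x; y] |: pedges (y :: s).
Proof. by []. Qed.

Lemma pedges_rcons x s y :
  pedges (rcons (x :: s) y) = pedges (x :: s) :|: [set [set last x s; y]].
Proof.
elim: s x => [|z s IH] x; first by rewrite /= setU0 set0U.
have -> : pedges (rcons (x :: z :: s) y) = [set x; z] |: pedges (rcons (z :: s) y) by [].
by rewrite IH pedges_cons2 setUA.
Qed.

Lemma pedges_mem s E : E \in pedges s -> exists a b, [/\ a \in s, b \in s & E = [set a; b]].
Proof.
elim: s => [|x s IH]; first by rewrite inE.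
case: s IH => [|y s] IH; first by rewrite /= inE.
rewrite pedges_cons2 in_setU in_set1 => /orP [/eqP ->|].
  by exists x, y; rewrite !inE !eqxx ?orbT.
move/IH=> [a [b [aS bS ->]]]; exists a, b; split=> //; rewrite inE ?aS ?bS orbT //.
Qed.

Lemma cedges_gen y0 y s : uniq (y :: s) ->
  [set [set z; next_at z y0 y s] | z in y :: s] = pedges (y :: rcons s y0).
Proof.
elim: s y => [|w s IH] y.
  move=> _; apply/setP=> E; rewrite /= !inE orbF; apply/imsetP/eqP.
    by case=> z; rewrite inE => /eqP -> ->; rewrite eqxx.
  by move->; exists y; rewrite ?inE ?eqxx.
move=> u; have yws : y \notin w :: s by case/andP: u.
have uw : uniq (w :: s) by case/andP: u.
have -> : pedges (y :: rcons (w :: s) y0) = [set y; w] |: pedges (w :: rcons s y0) by [].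
rewrite -(IH w uw).
have nE : forall z, next_at z y0 y (w :: s) = if z == y then w else next_at z y0 w s by [].
apply/setP=> E; rewrite in_setU in_set1; apply/imsetP/orP.
  case=> z; rewrite inE => /orP [/eqP ->|zin] ->; first by rewrite /= eqxx; left.
  have zny : z != y by apply: contraNneq yws => <-.
  rewrite /= (negPf zny); right; apply/imsetP; exists z => //.
case => [/eqP ->|/imsetP [z zin ->]]; first by exists y; rewrite ?inE ?eqxx //= eqxx.
have zny : z != y by apply: contraNneq yws => <-.
by exists z; rewrite ?inE ?zin ?orbT //= (negPf zny).
Qed.

Lemma cedgesE x s : uniq (x :: s) -> cycle_edges (x :: s) = pedges (x :: rcons s x).
Proof. move=> u; rewrite /cycle_edges /=; exact: cedges_gen. Qed.

Lemma cedgesF a s : uniq (a :: s) -> s != [::] ->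
  cycle_edges (a :: s) = [set [set a; head a s]] :|: pedges s :|: [set [set last a s; a]].
Proof.
move=> u; case: s u => [|h s] u // _; rewrite cedgesE //.
have -> : pedges (a :: rcons (h :: s) a) = [set a; h] |: pedges (rcons (h :: s) a) by [].
by rewrite pedges_rcons setUA.
Qed.

Lemma cedges_mem (c : seq T) (E : {set T}) : E \in cycle_edges c -> exists a b, [/\ a \in c, b \in c & E = [set a; b]].
Proof.
case/imsetP=> x xc ->; exists x, (next c x); split=> //; by rewrite mem_next.
Qed.

Lemma cedges_rot n (c : seq T) : uniq c -> cycle_edges (rot n c) = cycle_edges c.
Proof.
move=> u; apply/setP=> E; apply/imsetP/imsetP; case=> x xc ->; exists x;
  rewrite ?mem_rot // ?(next_rot n u) //; by rewrite mem_rot in xc.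
Qed.

Lemma cedges_rev (c : seq T) : uniq c -> cycle_edges (rev c) = cycle_edges c.
Proof.
move=> u; apply/setP=> E; apply/imsetP/imsetP; case=> x xc ->.
  rewrite mem_rev in xc; exists (prev c x); first by rewrite mem_prev.
  by rewrite (next_rev u) next_prev // setUC.
exists (next c x); first by rewrite mem_rev mem_next.
by rewrite (next_rev u) prev_next // setUC.
Qed.

Lemma gcycle_rot (S : {set T}) (r : rel T) n (c : seq T) : is_gcycle S r c -> is_gcycle S r (rot n c).
Proof.
by case/and4P=> u sz al cy; rewrite /is_gcycle rot_uniq size_rot rot_cycle u sz cy (eq_all_r (mem_rot n c)) al.
Qed.

Lemma gcycle_rev (S : {set T}) (r : rel T) (c : seq T) : symmetric r -> is_gcycle S r c -> is_gcycle S r (rev c).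
Proof.
move=> sym; case/and4P=> u sz al cy; rewrite /is_gcycle rev_uniq size_rev u sz all_rev al /=.
rewrite rev_cycle; by rewrite (@eq_cycle _ _ r).
Qed.

Lemma set2_eq (a b c d : T) : [set a; b] = [set c; d] -> (a == c) || (a == d).
Proof. by move/setP/(_ a); rewrite !inE eqxx /= => /esym. Qed.


Lemma path_restr (S : {set T}) (r : rel T) a s : path (restr S r) a s ->
  [/\ path r a s, all (mem S) s & (s != [::] -> a \in S)].
Proof.
elim: s a => [|x s IH] a //= /andP [/and3P [rax aS xS] pth].
by case: (IH _ pth) => p1 p2 _; rewrite rax p1 xS p2.
Qed.

Lemma restr_upath (S : {set T}) (r : rel T) a b :
  connect (restr S r) a b -> a != b ->
  exists s, [/\ uniq (a :: s), path r a s, last a s = b, a \in S & all (mem S) s].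
Proof.
move/connectP=> [s0 pth0 ->]; case: (shortenP pth0) => s pth u sub ab.
case: (path_restr pth) => p1 p2 p3; exists s; split=> //; apply: p3.
by apply: contraNneq ab => ->.
Qed.

Lemma cactus_deg (S : {set T}) (r : rel T) (U A1 A2 A3 : T) :
  symmetric r -> cactus S r -> U \in S -> A1 \in S :\ U -> A2 \in S :\ U -> A3 \in S :\ U ->
  r U A1 -> r U A2 -> r U A3 -> A1 != A2 -> A1 != A3 -> A2 != A3 ->
  (forall X Y, X \in S :\ U -> Y \in S :\ U -> connect (restr (S :\ U) r) X Y) -> False.
Proof.
move=> sym [_ cac] US A1S A2S A3S r1 r2 r3 n12 n13 n23 con.
have mk : forall B, B \in S :\ U -> A1 != B -> r U B ->
  exists s, [/\ is_gcycle S r (U :: A1 :: s), U \notin A1 :: s &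
     cycle_edges (U :: A1 :: s) = [set [set U; A1]] :|: pedges (A1 :: s) :|: [set [set B; U]]].
  move=> B BS nB rB; case: (restr_upath (con _ _ A1S BS) nB) => s [u pth lst A1S' al].
  have sub : forall x, x \in A1 :: s -> x \in S :\ U.
    by move=> x; rewrite inE => /orP [/eqP -> //|]; move/(allP al).
  have Un : U \notin A1 :: s by apply/negP => /sub; rewrite !inE eqxx.
  have sne : s != [::] by move: lst nB; case: s {pth u al sub Un} => //= ->; rewrite eqxx.
  exists s; split=> //.
  - apply/and4P; split.
    + by rewrite cons_uniq Un u.
    + by case: s sne {pth u lst al sub Un}.
    + apply/allP => x; rewrite inE => /orP [/eqP -> //|]; by move/sub; rewrite inE => /andP [].
    + rewrite /cycle rcons_cons /= r1 rcons_path pth lst sym rB //.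
  - by rewrite cedgesF ?cons_uniq ?Un ?u //= lst.
case: (mk _ A2S n12 r2) => s2 [c2 U2 E2].
case: (mk _ A3S n13 r3) => s3 [c3 U3 E3].
have h1 : [set U; A1] \in cycle_edges (U :: A1 :: s2) by rewrite E2 !inE eqxx.
have h2 : [set U; A1] \in cycle_edges (U :: A1 :: s3) by rewrite E3 !inE eqxx.
have := cac _ _ _ c2 c3 h1 h2.
have h3 : [set A3; U] \in cycle_edges (U :: A1 :: s3) by rewrite E3 !inE eqxx !orbT.
move=> E23; rewrite -E23 E2 !inE in h3.
have A3nU : A3 != U by move: A3S; rewrite !inE => /andP [].
case/orP: h3 => [/orP [/eqP h|]|/eqP h].
- move/set2_eq: h; rewrite (negPf A3nU) /= eq_sym (negPf n13) //.
- move/pedges_mem => [a [b [aS bS h]]].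
  move/setP/(_ U): h; rewrite !inE eqxx orbT => /esym /orP [] /eqP eU; by move: U2; rewrite eU ?aS ?bS.
- move/set2_eq: h; rewrite (negPf A3nU) /= eq_sym (negPf n23) //.
Qed.

Lemma hl_neq (a : T) t : uniq t -> 1 < size t -> head a t != last a t.
Proof.
case: t => [|h [|h2 t]] //= /andP [hn _] _.
by apply: contraNneq hn => ->; apply: mem_last.
Qed.

Lemma cyc_head (r : rel T) a t : cycle r (a :: t) -> t != [::] -> r a (head a t).
Proof. by case: t => [|h t] //= /andP []. Qed.

Lemma cyc_last (r : rel T) a t : cycle r (a :: t) -> r (last a t) a.
Proof. by rewrite /= rcons_path => /andP []. Qed.

Lemma cyc_path (r : rel T) a t : cycle r (a :: t) -> path r a t.
Proof. by rewrite /= rcons_path => /andP []. Qed.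

Lemma head_in (a : T) t : t != [::] -> head a t \in t.
Proof. by case: t => //= h t _; rewrite mem_head. Qed.

Lemma last_in (a : T) t : t != [::] -> last a t \in t.
Proof. by case: t => //= h t _; rewrite mem_last. Qed.

Lemma head_indep (a b : T) t : t != [::] -> head a t = head b t.
Proof. by case: t. Qed.

Lemma last_indep (a b : T) t : t != [::] -> last a t = last b t.
Proof. by case: t. Qed.

Lemma cedges_in (c : seq T) E X : E \in cycle_edges c -> X \in E -> X \in c.
Proof.
case/cedges_mem => a [b [ac bc ->]]; rewrite !inE => /orP [] /eqP ->; by [].
Qed.

Lemma gcycle_cons (S : {set T}) (r : rel T) a t : is_gcycle S r (a :: t) ->
  [/\ a \notin t, uniq t, 1 < size t, (forall z, z \in a :: t -> z \in S) & cycle r (a :: t)].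
Proof.
case/and4P => /andP [an u] sz al cy; split=> //.
by move=> z; move/allP: al => h /h.
Qed.

Lemma pedges_filter (W : T) (s : seq T) : W \notin s -> s != [::] -> uniq (W :: s) ->
  pedges s = [set E in cycle_edges (W :: s) | W \notin E].
Proof.
move=> Ws sne u; apply/setP => E; rewrite inE cedgesF // !in_setU.
apply/idP/idP.
  move=> Ep; rewrite Ep orbT /=.
  case: (pedges_mem Ep) => a [b [aS bS ->]]; rewrite !inE negb_or.
  by apply/andP; split; apply: contraNneq Ws => ->.
case/andP => /orP [/orP [|->//]|]; rewrite inE => /eqP -> ; by rewrite !inE eqxx ?orbT.
Qed.

Lemma path_head (r : rel T) a t : path r a t -> t != [::] -> r a (head a t).
Proof. by case: t => //= h t /andP []. Qed.

End Gen.

Lemma ivt (P : nat -> bool) a b : a <= b -> P a -> ~~ P b ->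
  exists k, [/\ a <= k, k < b, P k & ~~ P k.+1].
Proof.
elim: b => [|b IH] ab Pa Pb; first by move: ab Pa; rewrite leqn0 => /eqP ->; rewrite (negPf Pb).
case: (boolP (P b)) => Pb'.
  by exists b; split=> //; rewrite -ltnS; move: ab; rewrite leq_eqVlt => /orP [/eqP E|//];
    rewrite -E Pa in Pb.
have ab' : a <= b by move: ab; rewrite leq_eqVlt => /orP [/eqP E|//]; rewrite -E Pa in Pb.
by case: (IH ab' Pa Pb') => k [h1 h2 h3 h4]; exists k; split=> //; rewrite ltnS ltnW.
Qed.

Section Quot.
Variable V : finType.
Variable e : rel V.
Hypothesis e_sym : symmetric e.

Lemma frelE (F : {set V * V}) a b : frel F a b = ((a, b) \in F).
Proof. by []. Qed.

Lemma witP (F : {set V * V}) u v : (u \in wit F v) = connect (frel F) v u.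
Proof. by rewrite inE. Qed.

Lemma wit_refl (F : {set V * V}) v : v \in wit F v.
Proof. by rewrite witP connect0. Qed.

Lemma wit_in (F : {set V * V}) v : wit F v \in wstruct F.
Proof. by apply: imset_f. Qed.

Lemma frel_sym (F : {set V * V}) : edge_subset e F -> symmetric (frel F).
Proof. by move=> HF x y; apply/idP/idP => /HF []. Qed.

Lemma wit_sym (F : {set V * V}) u v : edge_subset e F -> (u \in wit F v) = (v \in wit F u).
Proof. by move=> HF; rewrite !witP (sym_connect_sym (frel_sym HF)). Qed.

Lemma wit_eq (F : {set V * V}) u v : edge_subset e F -> u \in wit F v -> wit F u = wit F v.
Proof.
move=> HF; rewrite witP => cvu; apply/setP => w; rewrite !witP.
by rewrite (same_connect (sym_connect_sym (frel_sym HF)) cvu).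
Qed.

Lemma wstructP (F : {set V * V}) X : X \in wstruct F -> exists z, X = wit F z.
Proof. by case/imsetP=> z _ ->; exists z. Qed.

Lemma qadj_sym : symmetric (qadj e).
Proof.
move=> A B; rewrite /qadj /= eq_sym; congr (_ && _).
apply/existsP/existsP => [[x /andP [xA /existsP [y /andP [yB exy]]]]|[x /andP [xB /existsP [y /andP [yA exy]]]]].
  by exists y; rewrite yB /=; apply/existsP; exists x; rewrite xA e_sym.
by exists y; rewrite yA /=; apply/existsP; exists x; rewrite xB e_sym.
Qed.

Lemma qadjI (A B : {set V}) x y : A != B -> x \in A -> y \in B -> e x y -> qadj e A B.
Proof.
move=> AB xA yB exy; rewrite /qadj /= AB /=; apply/existsP; exists x; rewrite xA /=.
by apply/existsP; exists y; rewrite yB.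
Qed.

Lemma qadjE (A B : {set V}) : qadj e A B -> A != B /\ exists x y, [/\ x \in A, y \in B & e x y].
Proof.
rewrite /qadj /= => /andP [AB /existsP [x /andP [xA /existsP [y /andP [yB exy]]]]].
by split=> //; exists x, y.
Qed.

Lemma restr_sym (S : {set V}) : symmetric (restr S e).
Proof. by move=> a b; rewrite !restrE (e_sym a b); congr (_ && _); exact: andbC. Qed.

Lemma qconnect (F : {set V * V}) (S : {set V}) (TT : {set {set V}}) x y :
  (forall z, z \in S -> wit F z \in TT) -> x \in S ->
  connect (restr S e) x y -> connect (restr TT (qadj e)) (wit F x) (wit F y).
Proof.
move=> hS xS; pose P := fun z => (z \in S) && connect (restr TT (qadj e)) (wit F x) (wit F z).
move=> cxy; suff: P y by case/andP.
apply: (conn_ind (P:=P)) cxy; last by rewrite /P xS connect0.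
move=> a b /andP [aS ca]; rewrite restrE => /and3P [eab _ bS]; rewrite /P bS /=.
case: (eqVneq (wit F a) (wit F b)) => [<- //|nab].
apply: connect_trans ca (connect1 _); rewrite restrE !hS // !andbT.
exact: qadjI nab (wit_refl _ _) (wit_refl _ _) eab.
Qed.

End Quot.

Section Main.
Variable V : finType.
Variable e : rel V.
Hypothesis e_sym : symmetric e.
Hypothesis e_irr : irreflexive e.
Hypothesis G2 : two_connected e.
Variable F : {set V * V}.
Hypothesis HF : minimal_cactus_set e F.
Variable f : V -> 'I_3.
Hypothesis Hmono : forall W, W \in wstruct F -> forall x y, x \in W -> y \in W -> f x = f y.
Variables Y Z : {set V}.
Hypothesis HY : mono_comp e f Y.
Hypothesis HZ : mono_comp e f Z.
Hypothesis HYZ : Y != Z.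
Variable p : seq V.
Hypothesis Hsize : 2 <= size p.
Hypothesis Hcomp : conn_comp (~: (Y :|: Z)) e [set x in p].
Hypothesis Hcable : max_cable_path [set: V] e p.
Hypothesis H1 : forall x0 : V, nbh [set: V] e (nth x0 p 0) \subset Y :|: [set nth x0 p 1].
Hypothesis Hl : forall x0 : V,
  nbh [set: V] e (nth x0 p (size p).-1) \subset Z :|: [set nth x0 p (size p).-2].
Variable d : V.

Local Notation n := (size p).
Local Notation v k := (nth d p k).
Local Notation ix w := (index w p).

Lemma HFs : edge_subset e F. Proof. by case: HF. Qed.

Lemma Puniq : uniq p.
Proof. by case: Hcable => [[/and3P []]]. Qed.

Lemma Pedge k : k.+1 < n -> e (v k) (v k.+1).
Proof. by case: Hcable => [[/and3P [_ _ /(sortedP d) h] _] _] /h. Qed.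

Lemma vin k : k < n -> v k \in p.
Proof. exact: mem_nth. Qed.

Lemma ixv k : k < n -> ix (v k) = k.
Proof. by move=> h; rewrite index_uniq // Puniq. Qed.

Lemma vix w : w \in p -> v (ix w) = w.
Proof. exact: nth_index. Qed.

Lemma ixlt w : w \in p -> ix w < n.
Proof. by rewrite index_mem. Qed.

Lemma vinj j k : j < n -> k < n -> v j = v k -> j = k.
Proof. by move=> hj hk E; rewrite -(ixv hj) E ixv. Qed.

Lemma PnYZ w : w \in p -> (w \notin Y) && (w \notin Z).
Proof.
case: Hcomp => sub _ _ _ wp; have := subsetP sub w; rewrite !inE wp => /(_ isT).
by rewrite negb_or.
Qed.

Lemma PnY w : w \in p -> w \notin Y. Proof. by case/PnYZ/andP. Qed.
Lemma PnZ w : w \in p -> w \notin Z. Proof. by case/PnYZ/andP. Qed.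

Lemma mono_ext (Y' : {set V}) u w : mono_comp e f Y' -> u \in Y' -> e u w -> f w = f u -> w \in Y'.
Proof.
move=> [[ne mono con] mx] uY euw fwu.
suff <- : w |: Y' = Y' by rewrite setU11.
apply: mx; last by apply: subsetUr.
split; first by apply/set0Pn; exists w; rewrite setU11.
  move=> x y; rewrite !inE => /orP [/eqP ->|xY] /orP [/eqP ->|yY] //.
  - by rewrite fwu (mono _ _ uY yY).
  - by rewrite fwu (mono _ _ uY xY).
  - exact: mono.
apply: (@gconnected_union _ [set w] Y' e w u) => //; rewrite ?inE ?eqxx //.
- by move=> a b; rewrite !inE => /eqP -> /eqP ->.
- by apply: connect1; rewrite restrE e_sym euw !inE eqxx uY orbT.
- by apply: connect1; rewrite restrE euw !inE eqxx uY orbT.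
Qed.


Lemma YZdisj w : w \in Y -> w \notin Z.
Proof.
move=> wY; apply/negP => wZ; move/negP: HYZ; apply.
case: HY => [[Yne Ym Yc] Ymx]; case: HZ => [[Zne Zm Zc] Zmx].
have mc : mono_conn e f (Y :|: Z).
  split; first by apply/set0Pn; exists w; rewrite inE wY.
    move=> x y; rewrite !inE => /orP [xY|xZ] /orP [yY|yZ].
    - exact: Ym.
    - by rewrite (Ym _ _ xY wY) (Zm _ _ wZ yZ).
    - by rewrite (Zm _ _ xZ wZ) (Ym _ _ wY yY).
    - exact: Zm.
  by apply: (@gconnected_union _ Y Z e w w) => //; apply: connect0.
have e1 := Ymx _ mc (subsetUl _ _); have e2 := Zmx _ mc (subsetUr _ _).
by apply/eqP; rewrite -{1}e1 e2.
Qed.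

Lemma Fcolor a b : (a, b) \in F -> f a = f b.
Proof.
move=> ab; apply: (Hmono (wit_in F a)); first exact: wit_refl.
by rewrite witP; apply: connect1.
Qed.

Lemma Fe a b : (a, b) \in F -> e a b.
Proof. by case/HFs. Qed.

Lemma nbr_cases k w : k < n -> e (v k) w ->
  [\/ (w \in p /\ (ix w = k.+1 \/ (ix w).+1 = k)), (k = 0 /\ w \in Y) | (k.+1 = n /\ w \in Z)].
Proof.
move=> kn ew.
have wnb : forall S, w \in nbh [set: V] S (v k) = S (v k) w by move=> S; rewrite !inE.
case: (posnP k) => [k0|kpos].
  have := subsetP (H1 d) w; rewrite -k0 wnb ew !inE => /(_ isT) /orP [wY|/eqP ->].
    by constructor 2.
  by constructor 1; split; [apply: vin; lia | left; rewrite ixv //; lia].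
case: (ltnP k.+1 n) => kn'.
  case: Hcable => [[_ cab] _]; have := cab k d kpos kn'.
  move/setP/(_ w); rewrite wnb ew !inE => /esym /orP [] /eqP ->;
    (constructor 1; split; [apply: vin; lia | rewrite ixv; lia]).
have kE : k = n.-1 by lia.
have := subsetP (Hl d) w; rewrite -kE wnb ew !inE => /(_ isT) /orP [wZ|/eqP ->].
  by constructor 3; split=> //; lia.
by constructor 1; split; [apply: vin; lia | right; rewrite ixv //; lia].
Qed.

Lemma Fstay a b : (a, b) \in F -> a \in p -> b \in p.
Proof.
move=> ab ap; have := Fe ab; rewrite -{1}(vix ap) => eab.
case: (nbr_cases (ixlt ap) eab) => [[] //|[_ bY]|[_ bZ]].
- have eba : e b a by rewrite e_sym -{1}(vix ap).
  by have := mono_ext HY bY eba (Fcolor ab); rewrite (negPf (PnY ap)).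
- have eba : e b a by rewrite e_sym -{1}(vix ap).
  by have := mono_ext HZ bZ eba (Fcolor ab); rewrite (negPf (PnZ ap)).
Qed.

Lemma witp z w : z \in p -> w \in wit F z -> w \in p.
Proof.
move=> zp; rewrite witP; apply: (conn_ind (P := mem p)) => // a b ap ab.
exact: Fstay ab ap.
Qed.

Lemma wit_mono (Y' : {set V}) u w : mono_comp e f Y' -> u \in Y' -> w \in wit F u -> w \in Y'.
Proof.
move=> HY' uY; rewrite witP; apply: (conn_ind (P := mem Y')) => // a b aY ab.
exact: mono_ext HY' aY (Fe ab) (esym (Fcolor ab)).
Qed.

Lemma IL z0 k w : z0 \in p -> k < n -> v k \notin wit F z0 -> w \in wit F z0 ->
  (ix w < k) = (ix z0 < k).
Proof.
move=> z0p kn vkn; rewrite witP => cw.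
pose Q := fun b => [&& b \in p, b \in wit F z0 & (ix b < k) == (ix z0 < k)].
suff /and3P [_ _ /eqP //] : Q w.
apply: (conn_ind (P := Q)) cw; last by rewrite /Q z0p wit_refl eqxx.
move=> a b /and3P [ap aW /eqP E] ab; have bp := Fstay ab ap.
have bW : b \in wit F z0 by rewrite witP (connect_trans _ (connect1 ab)) // -witP.
rewrite /Q bp bW -E /=.
have ian : ix a != k by apply: contraNneq vkn => <-; rewrite vix.
have ibn : ix b != k by apply: contraNneq vkn => <-; rewrite vix.
have := Fe ab; rewrite -{1}(vix ap) => eab.
case: (nbr_cases (ixlt ap) eab) => [[_ [] h]|[_ bY]|[_ bZ]].
- by apply/eqP; clear -h ian ibn; apply/idP/idP => ?; lia.
- by apply/eqP; clear -h ian ibn; apply/idP/idP => ?; lia.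
- by rewrite (negPf (PnY bp)) in bY.
- by rewrite (negPf (PnZ bp)) in bZ.
Qed.



Lemma v01 : v 0 != v 1.
Proof. by apply/eqP => /vinj; lia. Qed.

Lemma oneNbr : exists2 y1, y1 \in Y & e (v 0) y1.
Proof.
case: G2 => hV [_ hc].
have : ~~ ([set: V] \subset [set v 0; v 1]).
  by apply/negP => /subset_leq_card; rewrite cardsT cards2; move: hV; lia.
case/subsetPn => w _; rewrite !inE negb_or => /andP [w0 w1].
have := hc (v 1) (v 0) w; rewrite !inE v01 w1 => /(_ isT isT) /connectP [s pth wE].
case: s pth wE => [|h s] /=; first by move=> _ E; rewrite -E eqxx in w0.
rewrite restrE => /andP [/and3P [e0h _] hS _] _.
have := subsetP (H1 d) h; rewrite !inE e0h => /(_ isT) /orP [hY|/eqP hE].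
  by exists h.
by move: hS; rewrite hE !inE eqxx.
Qed.

Lemma twoNbr : exists y1 y2, [/\ y1 \in Y, y2 \in Y, y1 != y2, e (v 0) y1 & e (v 0) y2].
Proof.
case: oneNbr => y1 y1Y e01.
case: (boolP [exists y2 in Y, (y2 != y1) && e (v 0) y2]).
  case/existsP => y2 /and3P [y2Y ne e02]; exists y1, y2; split=> //; by rewrite eq_sym.
move/existsPn => hno; exfalso.
have y1p : y1 \notin p by apply: contraTN y1Y => /PnY.
have nbE : nbh [set: V] e (v 0) = [set y1; v 1].
  apply/setP => u; rewrite !inE /=; apply/idP/idP.
    move=> eu; have := subsetP (H1 d) u; rewrite !inE eu => /(_ isT) /orP [uY|->]; last by rewrite orbT.
    have := hno u; rewrite uY /= negb_and negbK eu orbF => ->; by [].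
  by case/orP => /eqP ->; rewrite ?e01 // Pedge.
case: Hcable => [[/and3P [pu _ ps] cab] mx].
have cq : cable_path [set: V] e (y1 :: p).
  split.
    apply/and3P; split.
    - by rewrite cons_uniq y1p pu.
    - by apply/allP => x; rewrite inE.
    - apply/(sortedP d) => i /= hi; case: i hi => [|i] hi /=; first by rewrite e_sym.
      by apply: Pedge; lia.
  move=> i x0 ipos hi; case: i ipos hi => [|[|i]] // _ hi /=.
    by rewrite (set_nth_default d x0 (ltnW Hsize)) (set_nth_default d x0 Hsize) nbE.
  have := cab i.+1 x0 isT; rewrite /=; apply; move: hi => /=; lia.
have := mx _ cq; rewrite (suffix_infix [:: y1] p) /= => /(_ isT); lia.
Qed.


Hypothesis HzN : exists2 z, z \in Z & e (v n.-1) z.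

Lemma YnP w : w \in Y -> w \notin p.
Proof. by move=> wY; apply: contraTN wY => /PnY. Qed.

Lemma ZnP w : w \in Z -> w \notin p.
Proof. by move=> wZ; apply: contraTN wZ => /PnZ. Qed.

Lemma nPsub (S : {set V}) : (forall y, y \in S -> y \notin p) -> S \subset ~: [set x in p].
Proof. by move=> h; apply/subsetP => y /h; rewrite !inE. Qed.

Lemma GP x y : x \notin p -> y \notin p -> connect (restr (~: [set x in p]) e) x y.
Proof.
move=> xp yp; set NP := ~: [set x in p].
case: oneNbr => y1 y1Y _.
have y1p : y1 \notin p by apply: contraTN y1Y => /PnY.
have inNP : forall z, (z \in NP) = (z \notin p) by move=> z; rewrite !inE.
pose K := fun z => connect (restr NP e) y1 z.
have Ysub : forall u, u \in Y -> K u.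
  move=> u uY; case: HY => [[_ _ Yc] _]; apply: connect_restr_sub (Yc _ _ y1Y uY).
  by apply: nPsub => w; apply: YnP.
have [z0 z0Z Kz0] : exists2 z0, z0 \in Z & K z0.
  case: (boolP [exists z in Z, K z]) => [/existsP [z /andP [zZ Kz]]|/existsPn hno].
    by exists z.
  case: G2 => _ [_ hc].
  have v10 : v 1 != v 0 by rewrite eq_sym v01.
  have y10 : y1 != v 0 by apply: contraNneq y1p => ->; apply: vin; lia.
  have c1 : connect (restr ([set: V] :\ v 0) e) y1 (v 1) by apply: hc; rewrite !inE ?y10 ?v10.
  suff : (v 1 \notin p) && K (v 1) by rewrite vin.
  apply: (conn_ind (P := fun b => (b \notin p) && K b)) c1; last by rewrite y1p /K connect0.
  move=> a b /andP [ap Ka]; rewrite restrE !inE => /and3P [eab _ b0].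
  case bp: (b \in p) => /=.
    have := e_sym a b; rewrite eab -{1}(vix bp) => /esym eba.
    case: (nbr_cases (ixlt bp) eba) => [[ap' _]|[h _]|[_ aZ]].
    - by rewrite ap' in ap.
    - by move: b0; rewrite -(vix bp) h eqxx.
    - by have := hno a; rewrite aZ Ka.
  by apply: connect_trans Ka (connect1 _); rewrite restrE eab !inE ap bp.
have Zsub : forall u, u \in Z -> K u.
  move=> u uZ; case: HZ => [[_ _ Zc] _]; apply: connect_trans Kz0 _.
  apply: connect_restr_sub (Zc _ _ z0Z uZ).
  by apply: nPsub => w; apply: ZnP.
have Kall : forall x, x \notin p -> K x.
  move=> x' xp'; apply/negPn/negP => nK.
  case: G2 => _ [hc _].
  have := hc x' (v 0); rewrite !inE => /(_ isT isT) c1.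
  suff : (v 0 \notin p) && ~~ K (v 0) by rewrite vin // ltnW.
  apply: (conn_ind (P := fun b => (b \notin p) && ~~ K b)) c1; last by rewrite xp' nK.
  move=> a b /andP [ap Ka]; rewrite restrE !inE => /and3P [eab _ _].
  case bp: (b \in p) => /=.
    have := e_sym a b; rewrite eab -{1}(vix bp) => /esym eba.
    case: (nbr_cases (ixlt bp) eba) => [[ap' _]|[_ aY]|[_ aZ]].
    - by rewrite ap' in ap.
    - by rewrite Ysub in Ka.
    - by rewrite Zsub in Ka.
  apply: contra Ka => Kb; apply: connect_trans Kb (connect1 _).
  by rewrite restrE e_sym eab !inE ap bp.
have sy := sym_connect_sym (restr_sym e_sym NP).
by apply: connect_trans (Kall _ yp); rewrite sy; apply: Kall.
Qed.


Lemma GW z0 x y : z0 \in p -> x \notin wit F z0 -> y \notin wit F z0 ->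
  connect (restr (~: wit F z0) e) x y.
Proof.
move=> z0p xW yW; set W := wit F z0.
have sub : ~: [set x in p] \subset ~: W.
  by apply/subsetP => w; rewrite !in_setC in_set; apply: contra => /(witp z0p).
case: oneNbr => y1 y1Y e01; case: HzN => z1 z1Z ez1.
have y1p := YnP y1Y; have z1p := ZnP z1Z.
have y1W : y1 \notin W by apply: contra y1p => /(witp z0p).
have z1W : z1 \notin W by apply: contra z1p => /(witp z0p).
have inW : forall w, (w \in ~: W) = (w \notin W) by move=> w; rewrite in_setC.
have R : forall x, x \notin W -> connect (restr (~: W) e) x y1.
  move=> x' xW'; case xp: (x' \in p); last first.
    by apply: connect_restr_sub sub _; apply: GP; rewrite ?xp.
  set k := ix x'; have kn : k < n by apply: ixlt.
  have vk : v k = x' by apply: vix.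
  have vnW : forall j, j < n -> (j < k) != (ix z0 < k) -> v j \notin W.
    move=> j jn; apply: contra => vjW.
    by rewrite -(IL z0p kn _ vjW) ?ixv ?vk.
  have z0k : ix z0 != k by apply: contraNneq xW' => E; rewrite -vk -E vix // wit_refl.
  case: (ltnP (ix z0) k) => hz.
    have vnW' : forall j, k <= j -> j < n -> v j \notin W.
      by move=> j kj jn; apply: vnW => //; rewrite ltnNge kj hz.
    have walk : forall m j, k <= j -> j + m = n.-1 -> connect (restr (~: W) e) (v j) y1.
      elim=> [|m IH] j kj jm.
        have jE : j = n.-1 by rewrite addn0 in jm.
        have jn : j < n by rewrite jE; case: (n) Hsize.
        apply: connect_trans (connect1 (_ : restr (~: W) e (v j) z1)) (connect_restr_sub sub (GP z1p y1p)).
        by rewrite restrE jE ez1 !inW z1W -jE vnW'.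
      have jn : j.+1 < n by move: jm Hsize; clear; lia.
      apply: connect_trans (connect1 (_ : restr (~: W) e (v j) (v j.+1))) (IH j.+1 _ _).
      - by rewrite restrE Pedge // !inW !vnW' // ?(leqW kj) // ltnW.
      - exact: leqW.
      - by move: jm; clear; lia.
    rewrite -vk; apply: (walk (n.-1 - k)) => //; move: kn; clear; lia.
  have kz : k < ix z0 by rewrite ltn_neqAle hz eq_sym z0k.
  have vnW' : forall j, j <= k -> v j \notin W.
    move=> j; rewrite leq_eqVlt => /orP [/eqP ->|jk]; first by rewrite vk.
    apply: vnW; first by apply: ltn_trans jk kn.
    by rewrite jk ltnNge (ltnW kz).
  have walk : forall j, j <= k -> connect (restr (~: W) e) (v j) y1.
    elim=> [|j IH] jk.
      by apply: connect1; rewrite restrE e01 !inW y1W vnW'.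
    apply: connect_trans (connect1 (_ : restr (~: W) e (v j.+1) (v j))) (IH (ltnW jk)).
    by rewrite restrE e_sym Pedge ?(leq_ltn_trans jk kn) // !inW !vnW' // ltnW.
  by rewrite -vk; apply: walk.
have sy := sym_connect_sym (restr_sym e_sym (~: W)).
by apply: connect_trans (R _ xW) _; rewrite sy; apply: R.
Qed.

Lemma wit_notin z z0 : z \notin wit F z0 -> wit F z != wit F z0.
Proof. by apply: contra => /eqP <-; rewrite wit_refl. Qed.

Lemma TW z0 : z0 \in p -> forall X X', X \in wstruct F :\ wit F z0 -> X' \in wstruct F :\ wit F z0 ->
  connect (restr (wstruct F :\ wit F z0) (qadj e)) X X'.
Proof.
move=> z0p X X'; rewrite !in_setD1 => /andP [XW XS] /andP [XW' XS'].
case/wstructP: XS => zx EX; case/wstructP: XS' => zy EX'; subst X X'.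
have nW : forall z, wit F z != wit F z0 -> z \notin wit F z0.
  by move=> z; apply: contra => /(wit_eq HFs) ->.
apply: (qconnect (S := ~: wit F z0)); last by apply: GW => //; apply: nW.
- by move=> z; rewrite in_setC => zW; rewrite in_setD1 wit_notin // wit_in.
- by rewrite in_setC nW.
Qed.

Lemma bigY : exists2 W, W \in wstruct F & (1 < #|W|) && (W \subset Y).
Proof.
case: twoNbr => y1 [y2 [y1Y y2Y ne12 e1 e2]].
set U := wit F (v 0).
have v0p : v 0 \in p by apply: vin; lia.
have Up : forall w, w \in U -> w \in p by move=> w; apply: witp.
have [r [u [uU eur rU rPZ]]] : exists r u, [/\ u \in U, e u r, r \notin U & (r \in p) || (r \in Z)].
  case: (boolP (v n.-1 \in U)) => hl.
    case: HzN => z zZ ez; exists z, (v n.-1); split=> //; last by rewrite zZ orbT.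
    by apply: contra (ZnP zZ); apply: Up.
  have [k [_ kn Pk Pk1]] := ivt (P := fun j => v j \in U) (leq0n n.-1) (wit_refl _ _) hl.
  have kn1 : k.+1 < n by clear -kn Hsize; lia.
  exists (v k.+1), (v k); split=> //; first by apply: Pedge.
  by rewrite vin.
have rY : forall y, y \in Y -> y \notin wit F r.
  move=> y yY; case/orP: rPZ => [rp|rZ].
    by apply: contra (YnP yY); apply: witp.
  by apply: contra (YZdisj yY); apply: wit_mono.
have yU : forall y, y \in Y -> y \notin U by move=> y yY; apply: contra (YnP yY); apply: Up.
case: (eqVneq (wit F y1) (wit F y2)) => E.
  exists (wit F y1); first exact: wit_in.
  apply/andP; split.
    by apply/card_gt1P; exists y1, y2; rewrite wit_refl E wit_refl.
  by apply/subsetP => w; apply: wit_mono.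
exfalso; case: HF => _ cac _.
apply: (@cactus_deg _ (wstruct F) (qadj e) U (wit F y1) (wit F y2) (wit F r) (qadj_sym e_sym) cac).
- exact: wit_in.
- by rewrite in_setD1 wit_notin ?yU // wit_in.
- by rewrite in_setD1 wit_notin ?yU // wit_in.
- by rewrite in_setD1 wit_notin // wit_in.
- by apply: (qadjI (x := v 0) (y := y1)) => //; rewrite ?wit_refl // eq_sym wit_notin ?yU.
- by apply: (qadjI (x := v 0) (y := y2)) => //; rewrite ?wit_refl // eq_sym wit_notin ?yU.
- by apply: (qadjI (x := u) (y := r)) => //; rewrite ?wit_refl // eq_sym wit_notin.
- exact: E.
- by rewrite wit_notin ?rY.
- by rewrite wit_notin ?rY.
- exact: TW.
Qed.

Lemma FF_connect (F1 F2 : {set V * V}) a b : F1 \subset F2 ->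
  connect (frel F1) a b -> connect (frel F2) a b.
Proof.
move=> sub; apply: connect_sub => u w /= uw; apply: connect1 => /=.
exact: (subsetP sub).
Qed.



Section Split.
Variable i : nat.
Hypothesis hi : i.+1 < n.
Hypothesis hF : (v i, v i.+1) \in F.

Let x := v i.
Let y := v i.+1.
Let Fp := F :\ (x, y) :\ (y, x).
Let W := wit F x.
Let W1 := wit Fp x.
Let W2 := wit Fp y.

Let xp : x \in p. Proof. by apply: vin; apply: ltnW. Qed.
Let yp : y \in p. Proof. by apply: vin. Qed.
Let ixx : ix x = i. Proof. by rewrite ixv // ltnW. Qed.
Let ixy : ix y = i.+1. Proof. by rewrite ixv. Qed.

Let Fp_in a b : ((a, b) \in Fp) = [&& (a, b) != (y, x), (a, b) != (x, y) & (a, b) \in F].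
Proof. by rewrite !in_setD1. Qed.

Let FpF a b : (a, b) \in Fp -> (a, b) \in F.
Proof. by rewrite Fp_in => /and3P []. Qed.

Let Fp_sub : Fp \subset F.
Proof. by apply/subsetP => [[a b]] /FpF. Qed.

Let Fp_es : edge_subset e Fp.
Proof.
move=> a b; rewrite Fp_in => /and3P [n1 n2 abF]; case: (HFs abF) => eab baF; split=> //.
rewrite Fp_in baF andbT; apply/andP; split.
  by apply: contra n2; rewrite !xpair_eqE => /andP [/eqP -> /eqP ->]; rewrite !eqxx.
by apply: contra n1; rewrite !xpair_eqE => /andP [/eqP -> /eqP ->]; rewrite !eqxx.
Qed.

Let Fp_proper : Fp \proper F.
Proof.
apply/properP; split=> //; exists (x, y) => //.
by rewrite Fp_in eqxx andbF.
Qed.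

Let W1sub w : w \in W1 -> (w \in p) && (ix w <= i).
Proof.
rewrite witP; apply: (conn_ind (P := fun b => (b \in p) && (ix b <= i))); last by apply/andP; split; [exact: xp | rewrite ixx].
move=> a b /andP [ap ai]; rewrite frelE => abFp; have abF := FpF abFp.
have bp := Fstay abF ap; rewrite bp /=.
have := Fe abF; rewrite -{1}(vix ap) => eab.
case: (nbr_cases (ixlt ap) eab) => [[_ [] h]|[_ bY]|[_ bZ]]; last first.
- by rewrite (negPf (PnZ bp)) in bZ.
- by rewrite (negPf (PnY bp)) in bY.
- by clear -h ai; lia.
case: (ltnP (ix a) i) => ha; first by rewrite h.
have aE : a = x by rewrite -(vix ap) /x; congr nth; apply/eqP; rewrite eqn_leq ha ai.
have bE : b = y by rewrite -(vix bp) /y h aE ixx.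
by move: abFp; rewrite Fp_in aE bE eqxx andbF.
Qed.

Let W2sub w : w \in W2 -> (w \in p) && (i < ix w).
Proof.
rewrite witP; apply: (conn_ind (P := fun b => (b \in p) && (i < ix b))); last by apply/andP; split; [exact: yp | rewrite ixy].
move=> a b /andP [ap ai]; rewrite frelE => abFp; have abF := FpF abFp.
have bp := Fstay abF ap; rewrite bp /=.
have := Fe abF; rewrite -{1}(vix ap) => eab.
case: (nbr_cases (ixlt ap) eab) => [[_ [] h]|[_ bY]|[_ bZ]]; last first.
- by rewrite (negPf (PnZ bp)) in bZ.
- by rewrite (negPf (PnY bp)) in bY.
- case: (ltnP (ix a) i.+2) => ha; last by clear -ha h ai; lia.
  have aE : a = y by rewrite -(vix ap) /y; congr nth; apply/eqP; rewrite eqn_leq ai -ltnS ha.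
  have bE : b = x by rewrite -(vix bp) /x; congr nth; move: h; rewrite aE ixy; clear; lia.
  by move: abFp; rewrite Fp_in aE bE eqxx.
- by clear -h ai; lia.
Qed.

Let xW : x \in W. Proof. exact: wit_refl. Qed.
Let yW : y \in W. Proof. by rewrite witP connect1. Qed.
Let WyE : wit F y = W. Proof. exact: wit_eq HFs yW. Qed.
Let Wp w : w \in W -> w \in p. Proof. exact: witp xp. Qed.

Let W1W w : w \in W1 -> w \in W.
Proof. by rewrite !witP; apply: FF_connect. Qed.

Let W2W w : w \in W2 -> w \in W.
Proof. by rewrite -WyE !witP; apply: FF_connect. Qed.

Let Wsplit w : w \in W -> (w \in W1) || (w \in W2).
Proof.
rewrite witP; apply: (conn_ind (P := fun b => (b \in W1) || (b \in W2))); last by rewrite /= wit_refl.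
move=> a b Pa; rewrite frelE => abF; case: (boolP ((a, b) \in Fp)) => abFp.
  by case/orP: Pa; rewrite !witP => h; apply/orP; [left|right];
    apply: connect_trans h (connect1 _).
move: abFp; rewrite Fp_in abF andbT negb_and !negbK !xpair_eqE.
by case/orP => /andP [_ /eqP ->]; rewrite wit_refl ?orbT.
Qed.

Let Wout z : z \notin W -> wit Fp z = wit F z.
Proof.
move=> zW; apply/setP => w; rewrite !witP; apply/idP/idP; first exact: FF_connect.
apply: (connect_transfer (P := fun b => b \in wit F z)); last exact: wit_refl.
move=> a b aZ; rewrite frelE => abF; rewrite witP (connect_trans _ (connect1 abF)) -?witP // andbT.
rewrite frelE Fp_in abF andbT !xpair_eqE.
have ax : a != x by apply: contraNneq zW => E; rewrite /W -E (wit_eq HFs aZ) wit_refl.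
have ay : a != y by apply: contraNneq zW => E; rewrite -WyE -E (wit_eq HFs aZ) wit_refl.
by rewrite (negPf ax) (negPf ay).
Qed.

Let yW1 : y \notin W1. Proof. by apply/negP => /W1sub; rewrite ixy ltnn andbF. Qed.
Let xW2 : x \notin W2. Proof. by apply/negP => /W2sub; rewrite ixx ltnn andbF. Qed.
Let W12 : W1 != W2. Proof. by apply: contraNneq yW1 => ->; exact: wit_refl. Qed.

Let WnT : W \notin wstruct Fp.
Proof.
apply/negP => /wstructP [z E]; have zW : z \in W by rewrite E wit_refl.
case/orP: (Wsplit zW) => zW'.
  by move: yW1; rewrite /W1 -(wit_eq Fp_es zW') -E yW.
by move: xW2; rewrite /W2 -(wit_eq Fp_es zW') -E xW.
Qed.

Let Tmem X : X \in wstruct Fp -> X != W1 -> X != W2 ->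
  exists z, [/\ z \notin W, X = wit F z & X = wit Fp z].
Proof.
case/wstructP => z -> n1 n2; case: (boolP (z \in W)) => zW.
  case/orP: (Wsplit zW) => zW'; by [rewrite (wit_eq Fp_es zW') eqxx in n1 |
    rewrite (wit_eq Fp_es zW') eqxx in n2].
by exists z; rewrite Wout.
Qed.

Let TmemF X : X \in wstruct Fp -> X != W1 -> X != W2 -> X \in wstruct F :\ W.
Proof.
move=> XT n1 n2; case: (Tmem XT n1 n2) => z [zW -> _].
by rewrite in_setD1 wit_in wit_notin.
Qed.


Let A := [set X in wstruct Fp | qadj e W1 X && (X != W2)].
Let B := [set X in wstruct Fp | qadj e W2 X && (X != W1)].

Let qsym := qadj_sym e_sym.

Let AT X : X \in A -> [/\ X \in wstruct F :\ W, qadj e W X & exists z, z \notin W /\ X = wit F z].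
Proof.
rewrite inE => /and3P [XT qX n2].
have n1 : X != W1 by case: (qadjE qX) => h _; rewrite eq_sym.
case: (Tmem XT n1 n2) => z [zW E _]; split; first exact: TmemF.
  case: (qadjE qX) => _ [u [w [uW1 wX euw]]].
  apply: (qadjI (x := u) (y := w)) => //; last exact: W1W.
  by rewrite E eq_sym wit_notin.
by exists z.
Qed.

Let BT X : X \in B -> [/\ X \in wstruct F :\ W, qadj e W X & exists z, z \notin W /\ X = wit F z].
Proof.
rewrite inE => /and3P [XT qX n1].
have n2 : X != W2 by case: (qadjE qX) => h _; rewrite eq_sym.
case: (Tmem XT n1 n2) => z [zW E _]; split; first exact: TmemF.
  case: (qadjE qX) => _ [u [w [uW2 wX euw]]].
  apply: (qadjI (x := u) (y := w)) => //; last exact: W2W.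
  by rewrite E eq_sym wit_notin.
by exists z.
Qed.

Let xnW z : z \notin W -> x \notin wit F z.
Proof. by apply: contra => h; rewrite /W (wit_eq HFs h) wit_refl. Qed.

Let ABdisj X : X \in A -> X \in B -> False.
Proof.
move=> XA XB; case: (AT XA) => XT _ [z [zW XE]].
move: XT; rewrite in_setD1 => /andP [XnW _].
move: XA XB; rewrite !inE => /and3P [_ q1 _] /and3P [_ q2 _].
case: (qadjE q1) => _ [u1 [z1 [u1W z1X e1]]].
case: (qadjE q2) => _ [u2 [z2 [u2W z2X e2]]].
have z1E : wit F z1 = X by rewrite XE; apply: wit_eq HFs _; rewrite -XE.
have nW : forall w, w \in X -> w \notin W.
  move=> w wX; apply: contra XnW => wW.
  have wz : w \in wit F z by rewrite -XE.
  by apply/eqP; rewrite XE -(wit_eq HFs wz) (wit_eq HFs wW).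
have z1W := nW _ z1X; have z2W := nW _ z2X.
have z21 : z2 \in wit F z1 by rewrite z1E.
case/andP: (W1sub u1W) => u1p u1i; case/andP: (W2sub u2W) => u2p u2i.
move: e1 e2; rewrite -{1}(vix u1p) -{1}(vix u2p) => e1 e2.
case: (nbr_cases (ixlt u1p) e1) => [[z1p h1]|[_ z1Y]|[h1 _]]; last first.
- by move: h1 u1i hi; clear; lia.
- have z2Y : z2 \in Y by apply: wit_mono HY z1Y z21.
  case: (nbr_cases (ixlt u2p) e2) => [[z2p _]|[h2 _]|[_ z2Z]].
  + by rewrite (negPf (YnP z2Y)) in z2p.
  + by move: h2 u2i; clear; lia.
  + by rewrite (negPf (YZdisj z2Y)) in z2Z.
case: (nbr_cases (ixlt u2p) e2) => [[z2p h2]|[h2 _]|[_ z2Z]]; last first.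
- have z1Z : z1 \in Z by apply: wit_mono HZ z2Z _; rewrite (wit_sym _ _ HFs).
  by have := YZdisj; move/(_ z1); rewrite z1Z; move: z1p; rewrite (negPf (ZnP z1Z)).
- by move: h2 u2i; clear; lia.
have nx : forall w, w \in p -> w \notin W -> ix w != i.
  by move=> w wp; apply: contra => /eqP E; rewrite -(vix wp) E.
have ny : forall w, w \in p -> w \notin W -> ix w != i.+1.
  by move=> w wp; apply: contra => /eqP E; rewrite -(vix wp) E.
have i1 := nx _ z1p z1W; have i1' := ny _ z1p z1W.
have i2 := nx _ z2p z2W; have i2' := ny _ z2p z2W.
have lt1 : ix z1 < i by clear -h1 u1i i1 i1'; lia.
have lt2 : ~~ (ix z2 < i) by clear -h2 u2i i2 i2'; lia.
have := IL z1p (ltnW hi) (xnW z1W) z21.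
by rewrite lt1 (negPf lt2).
Qed.


Let W1p w : w \in W1 -> w \in p. Proof. by case/W1sub/andP. Qed.
Let W2p w : w \in W2 -> w \in p. Proof. by case/W2sub/andP. Qed.

Let neqI (S1 S2 : {set V}) w : w \in S2 -> w \notin S1 -> S1 != S2.
Proof. by move=> w2 w1; apply: contraNneq w1 => ->. Qed.

Let Ane : exists a, a \in A.
Proof.
case: (boolP (v 0 \in W1)) => h0.
  case: oneNbr => y1 y1Y e01; have y1p := YnP y1Y.
  have y1W1 : y1 \notin W1 by apply: contra y1p; apply: W1p.
  have y1W2 : y1 \notin W2 by apply: contra y1p; apply: W2p.
  exists (wit Fp y1); rewrite inE wit_in /=.
  rewrite (qadjI (x := v 0) (y := y1)) ?wit_refl //=; last exact: neqI (wit_refl _ _) y1W1.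
  by rewrite eq_sym; apply: neqI (wit_refl _ _) y1W2.
have hx : ~~ (v i \notin W1) by rewrite negbK; exact: wit_refl.
have [k [_ ki Pk Pk1]] := ivt (P := fun j => v j \notin W1) (leq0n i) h0 hx.
move: Pk1; rewrite negbK => Pk1.
have kn : k < n by apply: ltn_trans ki (ltnW hi).
have k1n : k.+1 < n by apply: leq_ltn_trans ki (ltnW hi).
have vkW2 : v k \notin W2 by apply/negP => /W2sub; rewrite ixv // (leq_gtF (ltnW ki)) andbF.
have q : qadj e W1 (wit Fp (v k)).
  apply: (qadjI (x := v k.+1) (y := v k)) => //; last by rewrite e_sym Pedge.
  - exact: neqI (wit_refl _ _) Pk.
  - exact: wit_refl.
exists (wit Fp (v k)); rewrite inE wit_in q /=.
by rewrite eq_sym; apply: neqI (wit_refl _ _) vkW2.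
Qed.

Let Bne : exists b, b \in B.
Proof.
case: (boolP (v n.-1 \in W2)) => hl.
  case: HzN => z zZ ez; have zp := ZnP zZ.
  have zW1 : z \notin W1 by apply: contra zp; apply: W1p.
  have zW2 : z \notin W2 by apply: contra zp; apply: W2p.
  exists (wit Fp z); rewrite inE wit_in /=.
  rewrite (qadjI (x := v n.-1) (y := z)) ?wit_refl //=; last exact: neqI (wit_refl _ _) zW2.
  by rewrite eq_sym; apply: neqI (wit_refl _ _) zW1.
have hin : i.+1 <= n.-1 by clear -hi; lia.
have [k [ik kn Pk Pk1]] := ivt (P := fun j => v j \in W2) hin (wit_refl Fp y) hl.
have k1n : k.+1 < n by clear -kn hi; lia.
have vkW1 : v k.+1 \notin W1.
  have f1 : (k.+1 <= i) = false by clear -ik; lia.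
  by apply/negP => /W1sub; rewrite ixv // f1 andbF.
have q : qadj e W2 (wit Fp (v k.+1)).
  apply: (qadjI (x := v k) (y := v k.+1)) => //; last by rewrite Pedge.
  - exact: neqI (wit_refl _ _) Pk1.
  - exact: wit_refl.
exists (wit Fp (v k.+1)); rewrite inE wit_in q /=.
by rewrite eq_sym; apply: neqI (wit_refl _ _) vkW1.
Qed.

Let Tcac : cactus (wstruct F) (qadj e). Proof. by case: HF. Qed.

Let Aone X1 X2 : X1 \in A -> X2 \in A -> X1 = X2.
Proof.
move=> h1 h2; apply/eqP/negPn/negP => ne; case: Bne => b hb.
case: (AT h1) => m1 q1 _; case: (AT h2) => m2 q2 _; case: (BT hb) => m3 q3 _.
apply: (cactus_deg qsym Tcac (wit_in F x) m1 m2 m3 q1 q2 q3 ne) => //.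
- by apply/negP => /eqP E; apply: (ABdisj h1); rewrite E.
- by apply/negP => /eqP E; apply: (ABdisj h2); rewrite E.
- exact: TW xp.
Qed.

Let Bone X1 X2 : X1 \in B -> X2 \in B -> X1 = X2.
Proof.
move=> h1 h2; apply/eqP/negPn/negP => ne; case: Ane => a ha.
case: (BT h1) => m1 q1 _; case: (BT h2) => m2 q2 _; case: (AT ha) => m3 q3 _.
apply: (cactus_deg qsym Tcac (wit_in F x) m1 m2 m3 q1 q2 q3 ne) => //.
- by apply/negP => /eqP E; apply: (ABdisj ha); rewrite -E.
- by apply/negP => /eqP E; apply: (ABdisj ha); rewrite -E.
- exact: TW xp.
Qed.

Let T' := wstruct Fp.

Let NF c : is_gcycle T' (qadj e) c -> (W1 \in c) || (W2 \in c) ->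
  exists s, is_gcycle T' (qadj e) (W1 :: W2 :: s) /\ cycle_edges c = cycle_edges (W1 :: W2 :: s).
Proof.
move=> gc hW; have uc : uniq c by case/and4P: gc.
have W1c : W1 \in c.
  apply/negPn/negP => W1c; have W2c : W2 \in c by move: hW; rewrite (negPf W1c).
  have g2 := gcycle_rot (index W2 c) gc; rewrite (rot_index W2c) in g2.
  have W1n : W1 \notin W2 :: (drop (index W2 c).+1 c ++ take (index W2 c) c).
    by rewrite -(rot_index W2c) mem_rot.
  move: g2 W1n; set t := drop _ _ ++ _ => g2 W1n.
  case: (gcycle_cons g2) => _ ut st inS cy.
  have tne : t != [::] by case: t st {g2 W1n inS cy ut}.
  have hB : head W2 t \in B.
    rewrite inE inS ?cyc_head //=; last by rewrite inE head_in ?orbT.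
    by apply: contraNneq W1n => <-; rewrite inE head_in ?orbT.
  have lB : last W2 t \in B.
    rewrite inE inS /=; last by rewrite inE last_in ?orbT.
    rewrite qsym cyc_last //=.
    by apply: contraNneq W1n => <-; rewrite inE last_in ?orbT.
  by move/eqP: (hl_neq W2 ut st); apply; apply: Bone.
have g1 := gcycle_rot (index W1 c) gc; rewrite (rot_index W1c) in g1.
have E1 := cedges_rot (index W1 c) uc; rewrite (rot_index W1c) in E1.
move: g1 E1; set t := drop _ _ ++ _ => g1 E1.
case: (gcycle_cons g1) => W1t ut st inS cy.
have tne : t != [::] by case: t st {g1 E1 W1t inS cy ut}.
have hT : head W1 t \in T' by rewrite inS // inE head_in ?orbT.
have lT : last W1 t \in T' by rewrite inS // inE last_in ?orbT.
case: (eqVneq (head W1 t) W2) => hW2.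
  move: g1 E1 hW2; case: t {W1t ut st inS cy tne hT lT} => [|h s] //= g1 E1 hE.
  by exists s; rewrite -hE -E1.
case: (eqVneq (last W1 t) W2) => lW2; last first.
  have hA : head W1 t \in A by rewrite inE hT cyc_head //=.
  have lA : last W1 t \in A by rewrite inE lT qsym cyc_last //=.
  by exfalso; move/eqP: (hl_neq W1 ut st); apply; apply: Aone.
move: g1 E1 lW2; case/lastP: t {W1t ut st inS cy tne hT lT hW2} => [|s l] //.
rewrite last_rcons => g1 E1 lE; subst l.
exists (rev s); have u1 : uniq (W1 :: rcons s W2) by case/and4P: g1.
have -> : W1 :: W2 :: rev s = rotr 1 (rev (W1 :: rcons s W2)).
  by rewrite rev_cons rev_rcons rotr1_rcons.
split; first by apply: gcycle_rot; apply: gcycle_rev.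
by rewrite -E1 cedges_rot ?rev_uniq // cedges_rev.
Qed.

Let NF2 s : is_gcycle T' (qadj e) (W1 :: W2 :: s) ->
  [/\ s != [::], head W s \in B, last W s \in A, W \notin s & is_gcycle (wstruct F) (qadj e) (W :: s)].
Proof.
move=> g; case: (gcycle_cons g) => W1n u st inS cy.
move: u; rewrite cons_uniq => /andP [W2n us].
have sne : s != [::] by case: s st {g W1n inS cy W2n us}.
have sT : forall z, z \in s -> z \in T' by move=> z zs; apply: inS; rewrite !inE zs !orbT.
move: (cyc_path cy) => /= /andP [_ p2].
have hB : head W s \in B.
  rewrite (head_indep _ W2 sne) inE sT ?head_in // path_head //=.
  by apply: contraNneq W1n => <-; rewrite inE head_in ?orbT.
have lA : last W s \in A.
  rewrite (last_indep _ W2 sne) inE sT ?last_in //=.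
  have := cyc_last cy; rewrite /= qsym => -> /=.
  by apply: contraNneq W2n => <-; rewrite last_in.
have Wn : W \notin s by apply: contra WnT => /sT.
have sF : forall z, z \in s -> z \in wstruct F.
  move=> z zs; have h1 : z != W1 by apply: contraNneq W1n => <-; rewrite inE zs orbT.
  have h2 : z != W2 by apply: contraNneq W2n => <-.
  by move: (TmemF (sT _ zs) h1 h2); rewrite in_setD1 => /andP [].
have hl : head W s != last W s by apply/eqP => E; apply: (ABdisj lA); rewrite -E.
split=> //; apply/and4P; split.
- by rewrite cons_uniq Wn us.
- by move: hl; case: s {g W1n inS cy W2n us st sT hB lA Wn sF p2 sne} => [|h [|h2 sx]] //=; rewrite eqxx.
- by apply/allP => z; rewrite inE => /orP [/eqP ->|/sF //]; apply: wit_in.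
- case: (AT lA) => _ qWl _ ; case: (BT hB) => _ qWh _.
  rewrite /= rcons_path; apply/andP; split; last by rewrite qsym.
  move: p2 qWh; case: s sne {g W1n inS cy W2n us st sT hB lA Wn sF hl qWl} => //= h s' _.
  by case/andP => _ -> ->.
Qed.

Let Elarge s : s != [::] -> uniq (W1 :: W2 :: s) -> cycle_edges (W1 :: W2 :: s) =
  [set [set W1; W2]] :|: ([set [set W2; head W s]] :|: pedges s) :|: [set [set last W s; W1]].
Proof.
by move=> sne u; rewrite cedgesF //=; case: s sne u => //= h sx _ _.
Qed.

Let Esmall s : s != [::] -> uniq (W :: s) -> cycle_edges (W :: s) =
  [set [set W; head W s]] :|: pedges s :|: [set [set last W s; W]].
Proof. by move=> sne u; rewrite cedgesF. Qed.

Let avoid c : is_gcycle T' (qadj e) c -> ~~ ((W1 \in c) || (W2 \in c)) -> is_gcycle (wstruct F) (qadj e) c.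
Proof.
case/and4P => u sz al cy; rewrite negb_or => /andP [n1 n2].
apply/and4P; split=> //; apply/allP => z zc.
have h1 : z != W1 by apply: contraNneq n1 => <-.
have h2 : z != W2 by apply: contraNneq n2 => <-.
by move: (TmemF (allP al _ zc) h1 h2); rewrite in_setD1 => /andP [].
Qed.

Let mixed c1 c2 E : is_gcycle T' (qadj e) c1 -> is_gcycle T' (qadj e) c2 ->
  (W1 \in c1) || (W2 \in c1) -> ~~ ((W1 \in c2) || (W2 \in c2)) ->
  E \in cycle_edges c1 -> E \in cycle_edges c2 -> False.
Proof.
move=> g1 g2 h1 h2 E1 E2.
case: (NF g1 h1) => s [g Es]; case: (NF2 g) => sne _ _ Wn gT.
have u : uniq (W1 :: W2 :: s) by case/and4P: g.
have uW : uniq (W :: s) by case/and4P: gT.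
move: h2; rewrite negb_or => /andP [n1 n2].
have nE : forall X, X \in E -> X \in c2 by move=> X; apply: cedges_in.
have Ep : E \in pedges s.
  move: E1; rewrite Es Elarge // !in_setU !in_set1 => /orP [/orP [/eqP EE|/orP [/eqP EE|//]]|/eqP EE].
  - by move: (nE W1); rewrite EE !inE eqxx (negPf n1) => /(_ isT).
  - by move: (nE W2); rewrite EE !inE eqxx (negPf n2) => /(_ isT).
  - by move: (nE W1); rewrite EE !inE eqxx orbT (negPf n1) => /(_ isT).
have ES : E \in cycle_edges (W :: s) by rewrite Esmall // !in_setU Ep orbT.
have a2 : is_gcycle (wstruct F) (qadj e) c2 by apply: avoid => //; rewrite negb_or n1 n2.
have EW := Tcac.2 _ _ _ gT a2 ES E2.
have : [set last W s; W] \in cycle_edges (W :: s) by rewrite Esmall // !in_setU !in_set1 eqxx orbT.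
rewrite EW => /cedges_in hc; have Wc2 : W \in c2 by apply: hc; rewrite !inE eqxx orbT.
case/and4P: g2 => _ _ /allP al _.
by move: WnT; rewrite al.
Qed.

Let Tp_cactus : cactus T' (qadj e).
Proof.
split.
  move=> X X' /wstructP [a ->] /wstructP [b ->].
  apply: (qconnect (S := [set: V])); first by move=> z _; apply: wit_in.
    by rewrite inE.
  by case: G2 => _ [h _]; apply: h; rewrite inE.
move=> c1 c2 E g1 g2 E1 E2.
case: (boolP ((W1 \in c1) || (W2 \in c1))) => h1; case: (boolP ((W1 \in c2) || (W2 \in c2))) => h2.
- case: (NF g1 h1) => s1 [g1' Es1]; case: (NF2 g1') => sne1 hB1 lA1 Wn1 gT1.
  case: (NF g2 h2) => s2 [g2' Es2]; case: (NF2 g2') => sne2 hB2 lA2 Wn2 gT2.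
  have u1 : uniq (W1 :: W2 :: s1) by case/and4P: g1'.
  have u2 : uniq (W1 :: W2 :: s2) by case/and4P: g2'.
  have uW1 : uniq (W :: s1) by case/and4P: gT1.
  have uW2 : uniq (W :: s2) by case/and4P: gT2.
  have hE := Bone hB1 hB2; have lE := Aone lA1 lA2.
  have Ein1 : [set last W s1; W] \in cycle_edges (W :: s1) by rewrite Esmall // !in_setU !in_set1 eqxx orbT.
  have Ein2 : [set last W s1; W] \in cycle_edges (W :: s2) by rewrite Esmall // lE !in_setU !in_set1 eqxx orbT.
  have EW := Tcac.2 _ _ _ gT1 gT2 Ein1 Ein2.
  have pE : pedges s1 = pedges s2 by rewrite (pedges_filter Wn1) // (pedges_filter Wn2) // EW.
  by rewrite Es1 Es2 !Elarge // hE lE pE.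
- by exfalso; apply: (mixed g1 g2 h1 h2 E1 E2).
- by exfalso; apply: (mixed g2 g1 h2 h1 E2 E1).
- exact: Tcac.2 _ _ _ (avoid g1 h1) (avoid g2 h2) E1 E2.
Qed.

Lemma split_false : False.
Proof. by case: HF => _ _ /(_ Fp Fp_es Fp_proper). Qed.


End Split.
Lemma singletons w : w \in p -> #|wit F w| = 1.
Proof.
move=> wp; apply/eqP; rewrite eqn_leq; apply/andP; split; last first.
  by rewrite card_gt0; apply/set0Pn; exists w; apply: wit_refl.
suff all_w : forall u, u \in wit F w -> u = w.
  by apply/card_le1_eqP => a b /all_w -> /all_w ->.
move=> u uW; apply/eqP/negPn/negP => nuw.
move: uW; rewrite witP => /connectP [s pth uE].
case: s pth uE => [|h s] /=; first by move=> _ E; rewrite E eqxx in nuw.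
case/andP; rewrite frelE => whF _ _.
have hp := Fstay whF wp.
have := Fe whF; rewrite -{1}(vix wp) => ewh.
case: (nbr_cases (ixlt wp) ewh) => [[_ [] hE]|[_ hY]|[_ hZ]].
- apply: (@split_false (ix w)); first by rewrite -hE ixlt.
  by rewrite vix // -hE vix.
- have hwF : (h, w) \in F by case: (HFs whF).
  apply: (@split_false (ix h)); first by rewrite hE ixlt.
  by rewrite vix // hE vix.
- by rewrite (negPf (YnP hY)) in hp.
- by rewrite (negPf (ZnP hZ)) in hp.
Qed.

End Main.




Lemma rev_cable (V : finType) (e : rel V) (p : seq V) : symmetric e ->
  cable_path [set: V] e p -> cable_path [set: V] e (rev p).
Proof.
move=> es [/and3P [u al so] cab]; split.
  apply/and3P; split; first by rewrite rev_uniq.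
    by rewrite all_rev.
  rewrite rev_sorted; case: p {u al cab} so => //= a s.
  by rewrite (@eq_path _ _ e) // => x y; rewrite es.
move=> i x0 ip hi; rewrite size_rev in hi.
have hi' : i < size p by apply: ltn_trans hi.
rewrite !nth_rev //; last by apply: leq_trans hi'; apply: leq_pred.
have -> : size p - i.+2 = (size p - i.+1).-1 by clear -hi; lia.
have -> : size p - i.-1.+1 = (size p - i.+1).+1 by clear -hi ip; lia.
rewrite setUC; apply: cab; clear -hi ip; lia.
Qed.

Lemma rev_maxcable (V : finType) (e : rel V) (p : seq V) : symmetric e ->
  max_cable_path [set: V] e p -> max_cable_path [set: V] e (rev p).
Proof.
move=> es [cp mx]; split; first exact: rev_cable.
by move=> q cq; rewrite revK size_rev orbC; apply: mx.
Qed.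

Theorem lemma4p3 (V : finType) (e : rel V)
  (e_sym : symmetric e) (e_irr : irreflexive e)
  (G2 : two_connected e)
  (F : {set V * V}) (HF : minimal_cactus_set e F)
  (f : V -> 'I_3) (Hf : compatible e F f)
  (Y Z : {set V}) (HY : mono_comp e f Y) (HZ : mono_comp e f Z) (HYZ : Y != Z)
  (p : seq V) (Hsize : 2 <= size p)
  (Hcomp : conn_comp (~: (Y :|: Z)) e [set x in p])
  (Hcable : max_cable_path [set: V] e p)
  (H1 : forall x0 : V,
     nbh [set: V] e (nth x0 p 0) \subset Y :|: [set nth x0 p 1])
  (Hl : forall x0 : V,
     nbh [set: V] e (nth x0 p (size p).-1) \subset Z :|: [set nth x0 p (size p).-2]) :
  (forall v, v \in p -> #|wit F v| = 1) /\
  (exists2 W, W \in wstruct F & (1 < #|W|) && (W \subset Y)) /\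
  (exists2 W, W \in wstruct F & (1 < #|W|) && (W \subset Z)).
Proof.
have [d0 _] : exists d0 : V, true by move: Hsize; case: (p) => [|a ?] //; exists a.
case: Hf => Hmono _ _.
have HZY : Z != Y by rewrite eq_sym.
have Hsize' : 1 < size (rev p) by rewrite size_rev.
have Hcomp' : conn_comp (~: (Z :|: Y)) e [set x in rev p].
  have -> : [set x in rev p] = [set x in p] by apply/setP => z; rewrite !inE mem_rev.
  by rewrite setUC.
have Hcable' := rev_maxcable e_sym Hcable.
have n1 : 0 < size p by apply: ltnW.
have H1' : forall x0, nbh [set: V] e (nth x0 (rev p) 0) \subset Z :|: [set nth x0 (rev p) 1].
  move=> x0; rewrite !nth_rev // -?subn1 -?subn2.
  have -> : size p - 2 = (size p).-2 by clear; lia.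
  have -> : size p - 1 = (size p).-1 by clear; lia.
  exact: Hl.
have Hl' : forall x0, nbh [set: V] e (nth x0 (rev p) (size (rev p)).-1) \subset
                      Y :|: [set nth x0 (rev p) (size (rev p)).-2].
  move=> x0; rewrite size_rev !nth_rev; try (clear -Hsize; lia).
  have -> : size p - (size p).-1.+1 = 0 by clear -Hsize; lia.
  have -> : size p - (size p).-2.+1 = 1 by clear -Hsize; lia.
  exact: H1.
have HzN : exists2 z, z \in Z & e (nth d0 p (size p).-1) z.
  case: (oneNbr G2 HZY Hsize' Hcable' H1' d0) => z zZ ez; exists z => //.
  by move: ez; rewrite nth_rev // subn1.
have HzN' : exists2 z, z \in Y & e (nth d0 (rev p) (size (rev p)).-1) z.
  case: (oneNbr G2 HYZ Hsize Hcable H1 d0) => z zY ez; exists z => //.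
  rewrite size_rev nth_rev; last by clear -Hsize; lia.
  by have -> : size p - (size p).-1.+1 = 0 by clear -Hsize; lia.
split. move=> w wp. have := @singletons V e e_sym G2 F HF f Hmono Y Z HY HZ HYZ p Hsize Hcomp Hcable H1 Hl d0 HzN w wp. by [].
split; first exact: (@bigY V e e_sym G2 F HF f Hmono Y Z HY HZ HYZ p Hsize Hcomp Hcable H1 Hl d0 HzN).
exact: (@bigY V e e_sym G2 F HF f Hmono Z Y HZ HY HZY (rev p) Hsize' Hcomp' Hcable' H1' Hl' d0 HzN').
Qed.
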